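(* Let $X$ be a finite set, $F_X,F'_X$ filtrations over $X$ with facegrams $C_X,C'_X$. Then $$d_{\mathrm{B}}(\mathbf{mgm}(F_X),\mathbf{mgm}(F'_X))\leq d_\infty(\mathbf{mgm}^*(C_X),\mathbf{mgm}^*(C'_X))\leq d_{\mathrm{I}}(C_X,C'_X)=d_{\mathrm{I}}(F_X,F'_X).$$
   Context: $\mathbf{pow}(X)$: nonempty subsets of $X$. Filtration: order-preserving $F_X:(\mathbf{pow}(X),\subset)\to(\mathbb{R},\leq)$. Its facegram: $C_X(t)$ = inclusion-maximal elements of $\{\sigma\mid F_X(\sigma)\leq t\}$. Face-sets are ordered by $\mathcal{S}\leq\mathcal{S}'$ iff each member of $\mathcal{S}$ lies in a member of $\mathcal{S}'$. Lifespan $I_\sigma:=\{t\mid\sigma\in C_X(t)\}$, which is empty or of the form $[a,b)$, $a\in\mathbb{R}$, $b\in\mathbb{R}\cup\{\infty\}$. $\mathbf{mgm}$ is the multiset of nonempty lifespans (one per $\sigma$); $\mathbf{mgm}^*(C_X)=\{(\sigma,I_\sigma)\mid I_\sigma\neq\emptyset\}$. Bottleneck distance between multisets $A,B$ of intervals $[a,b)$: an $\varepsilon$-matching is a bijection $\varphi:A'\to B'$ between sub-multisets with $\max(|a-c|,|b-d|)\leq\varepsilon$ whenever $\varphi([a,b))=[c,d)$ (using $|\infty-\infty|=0$), and $|b-a|\leq2\varepsilon$ for every unmatched $[a,b)$; $d_{\mathrm{B}}(A,B)$ is the infimum of such $\varepsilon$. $d_\infty(\mathbf{mgm}^*(C_X),\mathbf{mgm}^*(C'_X)):=\max_{\sigma\in\mathbf{pow}(X)}d_{\mathrm{B}}(I^{C_X}_\sigma,I^{C'_X}_\sigma)$,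 each lifespan viewed as a multiset with zero or one interval. $d_{\mathrm{I}}(C_X,C'_X):=\inf\{\varepsilon\geq0\mid C_X(t)\leq C'_X(t+\varepsilon),\ C'_X(t)\leq C_X(t+\varepsilon)\ \forall t\}$; $d_{\mathrm{I}}(F_X,F'_X):=\max_{\sigma}|F_X(\sigma)-F'_X(\sigma)|$. *)

(* Defs.v *)
From HB Require Import structures.
From mathcomp Require Import all_boot all_order all_algebra.
From mathcomp Require Import boolp classical_sets reals constructive_ereal ereal.
Set Implicit Arguments. Unset Strict Implicit. Unset Printing Implicit Defensive.
Import Order.TTheory GRing.Theory Num.Theory.
Local Open Scope ring_scope.
Local Open Scope classical_set_scope.

Section Defs.
Variables (R : realType) (X : finType).

(* A filtration: order-preserving on nonempty subsets of X (values on set0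
   are irrelevant and never used). *)
Definition is_filtration (F : {set X} -> R) : Prop :=
  forall s t : {set X}, s != finset.set0 -> s \subset t -> F s <= F t.

Definition sublevel (F : {set X} -> R) (t : R) : {set {set X}} :=
  [set s : {set X} | (s != finset.set0) && (F s <= t)].

Definition facegram (F : {set X} -> R) (t : R) : {set {set X}} :=
  [set s in sublevel F t | [forall u in sublevel F t, ~~ (s \proper u)]].

Definition fs_le (S S' : {set {set X}}) : Prop :=
  forall s, s \in S -> exists2 u, u \in S' & s \subset u.

Definition lifespan (F : {set X} -> R) (s : {set X}) : set R :=
  [set t | s \in facegram F t].

End Defs.

(* intervals [a, b) with a real and b real or infinity (None = +infinity) *)
Definition itv (R : realType) := (R * option R)%type.

Definition itv_set (R : realType) (p : itv R) : set R :=
  [set t | p.1 <= t /\ (match p.2 with Some b => t < b | None => True end)].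

Definition lifespan_itv (R : realType) (X : finType) (F : {set X} -> R)
  (s : {set X}) : itv R :=
  xget (0, None) [set p : itv R | lifespan F s = itv_set p].

(* the lifespan viewed as a multiset with zero or one interval *)
Definition lifespan_ms (R : realType) (X : finType) (F : {set X} -> R)
  (s : {set X}) : seq (itv R) :=
  if pselect (lifespan F s !=set0) then [:: lifespan_itv F s] else [::].

Definition mgm (R : realType) (X : finType) (F : {set X} -> R) : seq (itv R) :=
  flatten [seq lifespan_ms F s | s <- enum [pred s : {set X} | s != finset.set0]].

(* right endpoints within eps, with |oo - oo| = 0 *)
Definition end_close (R : realType) (eps : R) (b d : option R) : Prop :=
  match b, d with
  | Some b, Some d => `|b - d| <= eps
  | None, None => True
  | _, _ => False
  end.

Definition itv_close (R : realType) (eps : R) (p q : itv R) : Prop :=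
  `|p.1 - q.1| <= eps /\ end_close eps p.2 q.2.

Definition itv_short (R : realType) (eps : R) (p : itv R) : Prop :=
  match p.2 with Some b => `|b - p.1| <= 2 * eps | None => False end.

(* eps-matching between multisets A and B (represented as sequences; the
   partial injection phi on indices is a bijection between sub-multisets) *)
Definition eps_matching (R : realType) (eps : R) (A B : seq (itv R)) : Prop :=
  exists phi : 'I_(size A) -> option 'I_(size B),
    (forall i j k, phi i = Some k -> phi j = Some k -> i = j) /\
    (forall i k, phi i = Some k ->
        itv_close eps (nth (0, None) A i) (nth (0, None) B k)) /\
    (forall i, phi i = None -> itv_short eps (nth (0, None) A i)) /\
    (forall k, (forall i, phi i <> Some k) -> itv_short eps (nth (0, None) B k)).

(* bottleneck distance (extended real; +oo if no matching exists) *)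
Definition d_B (R : realType) (A B : seq (itv R)) : \bar R :=
  ereal_inf [set e%:E | e in [set e : R | 0 <= e /\ eps_matching e A B]].

Definition d_inf (R : realType) (X : finType) (F F' : {set X} -> R) : \bar R :=
  \big[Order.max/0%E]_(s : {set X} | s != finset.set0)
     d_B (lifespan_ms F s) (lifespan_ms F' s).

Definition d_I_fg (R : realType) (X : finType) (F F' : {set X} -> R) : \bar R :=
  ereal_inf [set e%:E | e in [set e : R | 0 <= e /\
     (forall t : R, fs_le (facegram F t) (facegram F' (t + e)) /\
                    fs_le (facegram F' t) (facegram F (t + e)))]].

Definition d_I_filt (R : realType) (X : finType) (F F' : {set X} -> R) : R :=
  \big[Num.max/0]_(s : {set X} | s != finset.set0) `|F s - F' s|.

(* Main.v *)
Require Import Defs.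
From HB Require Import structures.
From mathcomp Require Import all_boot all_order all_algebra.
From mathcomp Require Import boolp classical_sets reals constructive_ereal ereal.
From mathcomp Require Import zify lra.
Import Order.TTheory GRing.Theory Num.Theory.
Local Open Scope ring_scope.
Set Implicit Arguments. Unset Strict Implicit.

Section Match.
Variable R : realType.
Notation d0 := ((0:R), @None R).

Definition matchN (e : R) (A B : seq (itv R)) :=
 exists f : nat -> option nat,
  [/\ (forall i k, (i < size A)%N -> f i = Some k ->
          (k < size B)%N /\ itv_close e (nth d0 A i) (nth d0 B k)),
      (forall i j k, (i < size A)%N -> (j < size A)%N -> f i = Some k -> f j = Some k -> i = j),
      (forall i, (i < size A)%N -> f i = None -> itv_short e (nth d0 A i)) &
      (forall k, (k < size B)%N -> (forall i, (i < size A)%N -> f i <> Some k) ->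
          itv_short e (nth d0 B k))].

Lemma insub_someE {n} {a : nat} {k : 'I_n} : insub a = Some k -> val k = a.
Proof. by case: insubP => // u _ <- [->]. Qed.

Lemma matchN_eps (e : R) A B : matchN e A B -> eps_matching e A B.
Proof.
case=> f [H1 H2 H3 H4].
exists (fun i : 'I_(size A) => match f (val i) with Some k => insub k | None => None end).
split; [|split; [|split]].
- move=> i j k; case Ei: (f (val i)) => [a|] // Ha; case Ej: (f (val j)) => [b|] // Hb.
  apply: val_inj; apply: (H2 _ _ a (ltn_ord i) (ltn_ord j) Ei).
  by rewrite Ej -(insub_someE Hb) (insub_someE Ha).
- move=> i k; case Ei: (f (val i)) => [a|] // Ha.
  have := H1 _ _ (ltn_ord i) Ei; by rewrite -(insub_someE Ha) => -[].
- move=> i; case Ei: (f (val i)) => [a|]; last by move=> _; exact: H3 (ltn_ord i) Ei.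
  have [Ha _] := H1 _ _ (ltn_ord i) Ei; by rewrite (insubT (fun x => x < size B)%N Ha).
- move=> k Hk; apply: H4 (ltn_ord k) _ => i Hi Ei.
  apply: (Hk (Ordinal Hi)) => /=; rewrite Ei.
  by rewrite (insubT (fun x => x < size B)%N (ltn_ord k)); congr Some; apply: val_inj.
Qed.

Lemma eps_matchN (e : R) A B : eps_matching e A B -> matchN e A B.
Proof.
case=> phi [H1 [H2 [H3 H4]]].
pose f n := if (insub n : option 'I_(size A)) is Some i then omap val (phi i) else None.
have fE (i : 'I_(size A)) : f (val i) = omap val (phi i) by rewrite /f valK.
exists f; split.
- move=> i k Hi; rewrite -[i]/(val (Ordinal Hi)) fE.
  case E: (phi _) => [k'|] //= [<-]; split; first exact: ltn_ord.
  exact: H2 E.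
- move=> i j k Hi Hj; rewrite -[i]/(val (Ordinal Hi)) -[j]/(val (Ordinal Hj)) !fE.
  case Ei: (phi _) => [a|] //= [<-]; case Ej: (phi _) => [b|] //= [/val_inj Eab].
  by rewrite Eab in Ej; have := H1 _ _ _ Ei Ej => -[].
- move=> i Hi; rewrite -[i]/(val (Ordinal Hi)) fE; case Ei: (phi _) => //= _.
  exact: H3 Ei.
- move=> k Hk Hn; apply: (H4 (Ordinal Hk)) => i Ei.
  by apply: (Hn _ (ltn_ord i)); rewrite fE Ei.
Qed.

Lemma itv_close_mono (e e' : R) (p q : itv R) : e <= e' -> itv_close e p q -> itv_close e' p q.
Proof.
move=> ee [h1 h2]; split; first exact: le_trans ee.
by move: h2; rewrite /end_close; case: p.2 => [b|]; case: q.2 => [d|] // h; apply: le_trans ee.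
Qed.

Lemma itv_short_mono (e e' : R) (p : itv R) : e <= e' -> itv_short e p -> itv_short e' p.
Proof.
move=> ee; rewrite /itv_short; case: p.2 => [b|] // h; apply: le_trans h _.
by rewrite ler_pM2l.
Qed.

Lemma matchN_mono (e e' : R) A B : e <= e' -> matchN e A B -> matchN e' A B.
Proof.
move=> ee [f [H1 H2 H3 H4]]; exists f; split => //.
- by move=> i k Hi Ei; have [? ?] := H1 _ _ Hi Ei; split => //; exact: itv_close_mono ee _.
- by move=> i Hi Ei; apply: itv_short_mono ee _; exact: H3.
- by move=> k Hk Hn; apply: itv_short_mono ee _; exact: H4.
Qed.

Lemma matchN_nil (e : R) : matchN e [::] [::].
Proof. by exists (fun _ => None); split. Qed.

Lemma matchN_cat (e : R) A B A' B' :
  matchN e A B -> matchN e A' B' -> matchN e (A ++ A') (B ++ B').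
Proof.
case=> f [H1 H2 H3 H4] [g [G1 G2 G3 G4]].
exists (fun n => if (n < size A)%N then f n else omap (addn (size B)) (g (n - size A)%N)).
rewrite !size_cat; split.
- move=> i k Hi; case: ifP => Ai.
    move=> Ei; have [Hk Hc] := H1 _ _ Ai Ei; split; first lia.
    by rewrite !nth_cat Ai Hk.
  case Eg: (g _) => [a|] //= [<-].
  have Ai' : (i - size A < size A')%N by lia.
  have [Ha Hc] := G1 _ _ Ai' Eg; split; first lia.
  rewrite !nth_cat Ai; have -> : (size B + a < size B)%N = false by lia.
  by rewrite addKn.
- move=> i j k Hi Hj; case: ifP => Ai; case: ifP => Aj.
  + exact: H2.
  + move=> Ei; case Eg: (g _) => [a|] //= [Ek]; have := H1 _ _ Ai Ei; lia.
  + case Eg: (g _) => [a|] //= [Ek] Ej; have := H1 _ _ Aj Ej; lia.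
  + case Eg: (g (i - _)%N) => [a|] //= [Ek]; case Eg': (g (j - _)%N) => [b|] //= [Ek'].
    have ab : a = b by lia.
    rewrite ab in Eg.
    have := G2 (i - size A)%N (j - size A)%N b ltac:(lia) ltac:(lia) Eg Eg'; lia.
- move=> i Hi; rewrite nth_cat; case: ifP => Ai; first exact: H3.
  case Eg: (g _) => [a|] //= _; apply: G3 Eg; lia.
- move=> k Hk Hn; rewrite nth_cat; case: ifP => Bk.
    apply: H4 Bk _ => i Hi Ei; apply: (Hn i); first lia.
    by rewrite Hi.
  apply: G4; first by rewrite ltn_subLR // leqNgt Bk.
  move=> i Hi Ei; apply: (Hn (size A + i)); first lia.
  have -> : (size A + i < size A)%N = false by lia.
  rewrite addKn Ei /=; congr Some; by rewrite subnKC // leqNgt Bk.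
Qed.

Lemma matchN_flatten (T : eqType) (e : R) (f g : T -> seq (itv R)) (l : seq T) :
  (forall x, x \in l -> matchN e (f x) (g x)) ->
  matchN e (flatten (map f l)) (flatten (map g l)).
Proof.
elim: l => [|x l IH] H /=; first exact: matchN_nil.
apply: matchN_cat; first by apply: H; rewrite inE eqxx.
by apply: IH => y hy; apply: H; rewrite inE hy orbT.
Qed.
End Match.

Lemma ex_argmin (d : Order.disp_t) (O : orderType d) (I : finType) (P : {pred I})
   (f : I -> O) i0 : P i0 -> exists2 j, P j & forall i, P i -> (f j <= f i)%O.
Proof. by move=> Pi0; case: (arg_minP f Pi0) => j Pj H; exists j. Qed.

Lemma ex_argmax (d : Order.disp_t) (O : orderType d) (I : finType) (P : {pred I})
   (f : I -> O) i0 : P i0 -> exists2 j, P j & forall i, P i -> (f i <= f j)%O.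
Proof. by move=> Pi0; case: (arg_maxP f Pi0) => j Pj H; exists j. Qed.

Section Face.
Variables (R : realType) (X : finType) (F : {set X} -> R).

Lemma mem_fg (t : R) (s : {set X}) : s != finset.set0 ->
  (s \in facegram F t) <-> (F s <= t /\ forall u : {set X}, s \proper u -> t < F u).
Proof.
move=> s0; rewrite /facegram /sublevel !inE s0 /=; split.
- case/andP=> Fs /forallP H; split => // u su; rewrite ltNge; apply/negP => Fu.
  have := H u; rewrite !inE Fu andbT.
  have -> : u != finset.set0.
    apply/negP => /eqP u0; move/proper_sub: su; rewrite u0 finset.subset0; exact/negP.
  by rewrite su.
- case=> Fs H; rewrite Fs /=; apply/forallP => u; rewrite !inE; apply/implyP => /andP[_ Fu].
  by apply/negP => su; have := H u su; rewrite ltNge Fu.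
Qed.

Lemma max_above (t : R) s : s \in sublevel F t ->
  exists2 u, u \in facegram F t & s \subset u.
Proof.
move=> st.
have [|u /andP[ut su] Hu] := @ex_argmax _ nat _ [pred u : {set X} | (u \in sublevel F t) && (s \subset u)]
   (fun u => #|u|) s; first by rewrite /= st subxx.
exists u => //; rewrite /facegram inE ut /=; apply/forallP => v; apply/implyP => vt.
apply/negP => uv; have := Hu v; rewrite /= vt (fintype.subset_trans su (proper_sub uv)) => /(_ erefl).
by rewrite leEnat leqNgt (proper_card uv).
Qed.

Hypothesis hF : is_filtration F.

Lemma lifespan_rep s : s != finset.set0 -> exists p, lifespan F s = itv_set p.
Proof.
move=> s0; case: (boolP [exists u : {set X}, s \proper u]).
- case/existsP => u0 su0.
  have [j sj Hj] := @ex_argmin _ R _ [pred u : {set X} | s \proper u] F u0 su0.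
  exists (F s, Some (F j)); apply/funext => t; apply/propext; rewrite /lifespan /itv_set /=.
  rewrite mem_fg //; split => -[Fs H]; split => //.
    exact: H.
  by move=> u su; apply: lt_le_trans H (Hj u su).
- rewrite negb_exists => /forallP H.
  exists (F s, None); apply/funext => t; apply/propext; rewrite /lifespan /itv_set /=.
  rewrite mem_fg //; split => -[Fs _]; split => // u su.
  by have := H u; rewrite su.
Qed.

Lemma lifespan_itvE s : s != finset.set0 -> lifespan F s = itv_set (lifespan_itv F s).
Proof. by move=> s0; apply: (@xgetPex _ _ [set p | lifespan F s = itv_set p]); apply: lifespan_rep. Qed.

Section Props.
Variables (s : {set X}) (s0 : s != finset.set0) (ne : (lifespan F s !=set0)%classic).
Let p := lifespan_itv F s.
Let E := lifespan_itvE s0.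

Lemma lp1 : p.1 = F s.
Proof.
case: ne => t0; rewrite /lifespan /= mem_fg // => -[Fs0 H].
have Fs : lifespan F s (F s) by rewrite /lifespan /= mem_fg //; split => // u su; apply: le_lt_trans Fs0 (H u su).
have t0p : itv_set p t0 by rewrite -/p -E /lifespan /= mem_fg.
have p1 : itv_set p p.1.
  case: t0p => h1 h2; split => //; move: h2; case: p.2 => // b h; exact: le_lt_trans h1 h.
move: Fs p1; rewrite E => -[h _]; rewrite -E /lifespan /= mem_fg // => -[h' _].
by apply/eqP; rewrite eq_le h h'.
Qed.

Lemma lp_lt b : p.2 = Some b -> p.1 < b.
Proof.
move=> pb; case: ne => t0; rewrite -/p E /itv_set /= pb => -[h1 h2].
exact: le_lt_trans h1 h2.
Qed.

Lemma lpA (u : {set X}) : s \proper u -> exists2 b, p.2 = Some b & b <= F u.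
Proof.
move=> su.
have nL : ~ lifespan F s (F u) by rewrite /lifespan /= mem_fg // => -[_ /(_ u su)]; rewrite ltxx.
have Fsu : F s <= F u := hF s0 (proper_sub su).
move: nL; rewrite E /itv_set /= lp1; case E2: p.2 => [b|].
  by move=> H; exists b => //; rewrite leNgt; apply/negP => h; apply: H.
by move=> H; exfalso; apply: H.
Qed.

Lemma lpB b : p.2 = Some b -> exists2 u : {set X}, s \proper u & F u <= b.
Proof.
move=> pb.
have nL : ~ lifespan F s b by rewrite E /itv_set /= pb ltxx => -[].
have Fsb : F s <= b by rewrite -lp1; apply: ltW; apply: lp_lt.
case: (boolP [exists u : {set X}, (s \proper u) && (F u <= b)]).
  by case/existsP => u /andP[]; exists u.
rewrite negb_exists => /forallP H; exfalso; apply: nL; rewrite /lifespan /= mem_fg //.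
split => // u su; have := H u; rewrite su /= ltNge; exact.
Qed.
End Props.
End Face.

Lemma proper_nonempty (X : finType) (s u : {set X}) :
  s != finset.set0 -> s \proper u -> u != finset.set0.
Proof.
move=> s0 su; apply/negP => /eqP u0; move/proper_sub: su; rewrite u0 finset.subset0.
exact/negP.
Qed.

Section Two.
Variables (R : realType) (X : finType) (F F' : {set X} -> R) (d : R).
Hypotheses (hF : is_filtration F) (hF' : is_filtration F').
Hypothesis hd : forall s, s != finset.set0 -> `|F s - F' s| <= d.

Lemma hdl s : s != finset.set0 -> F s <= F' s + d.
Proof. by move=> s0; have := hd s0; rewrite ler_norml; lra. Qed.
Lemma hdr s : s != finset.set0 -> F' s <= F s + d.
Proof. by move=> s0; have := hd s0; rewrite ler_norml; lra. Qed.

Section S.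
Variables (s : {set X}) (s0 : s != finset.set0).

Lemma some_close b b' :
  (lifespan F s !=set0)%classic -> (lifespan F' s !=set0)%classic ->
  (lifespan_itv F s).2 = Some b -> (lifespan_itv F' s).2 = Some b' -> b <= b' + d.
Proof.
move=> ne ne' pb qb.
have [u su Fu] := lpB s0 ne' qb.
have [b0 pb0 b0u] := lpA hF s0 ne su.
rewrite pb in pb0; case: pb0 => ->.
have := hdl (proper_nonempty s0 su); lra.
Qed.

Lemma none_some b' :
  (lifespan F s !=set0)%classic -> (lifespan F' s !=set0)%classic ->
  (lifespan_itv F s).2 = None -> (lifespan_itv F' s).2 = Some b' -> False.
Proof.
move=> ne ne' pb qb.
have [u su Fu] := lpB s0 ne' qb.
have [b0 pb0 b0u] := lpA hF s0 ne su.
by rewrite pb in pb0.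
Qed.

Lemma short_empty :
  (lifespan F s !=set0)%classic -> ~ (lifespan F' s !=set0)%classic ->
  itv_short d (lifespan_itv F s).
Proof.
move=> ne ne'.
have [u su Fu] : exists2 u : {set X}, s \proper u & F' u <= F' s.
  case: (boolP [exists u : {set X}, (s \proper u) && (F' u <= F' s)]).
    by case/existsP => u /andP[]; exists u.
  rewrite negb_exists => /forallP H; exfalso; apply: ne'; exists (F' s).
  rewrite /lifespan /= mem_fg //; split => // u su; have := H u; rewrite su /= ltNge; exact.
have [b pb bu] := lpA hF s0 ne su.
have lt := lp_lt s0 ne pb; rewrite (lp1 s0 ne) in lt.
rewrite /itv_short pb (lp1 s0 ne) ger0_norm; last by rewrite subr_ge0 ltW.
have := hdl (proper_nonempty s0 su); have := hdr s0; lra.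
Qed.
End S.

Lemma interleave_half e : d <= e -> forall t : R,
  fs_le (facegram F t) (facegram F' (t + e)).
Proof.
move=> de t s; rewrite /facegram inE => /andP[st _]; apply: max_above.
move: st; rewrite /sublevel !inE => /andP[s0 Fs]; rewrite s0 /=.
have := hdr s0; lra.
Qed.
End Two.

Lemma lower_half (R : realType) (X : finType) (F F' : {set X} -> R) (e : R) :
  is_filtration F -> (forall t : R, fs_le (facegram F' t) (facegram F (t + e))) ->
  forall s, s != finset.set0 -> F s <= F' s + e.
Proof.
move=> hF H s s0.
have [u uC su] : exists2 u, u \in facegram F' (F' s) & s \subset u.
  by apply: max_above; rewrite /sublevel inE s0 lexx.
have [v vC uv] := H _ u uC.
move: vC; rewrite /facegram /sublevel !inE => /andP[/andP[_ Fv] _].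
exact: le_trans (hF s v s0 (fintype.subset_trans su uv)) Fv.
Qed.

Lemma per_s (R : realType) (X : finType) (F F' : {set X} -> R) (d : R) :
  is_filtration F -> is_filtration F' ->
  (forall s, s != finset.set0 -> `|F s - F' s| <= d) ->
  forall s, s != finset.set0 -> matchN d (lifespan_ms F s) (lifespan_ms F' s).
Proof.
move=> hF hF' hd s s0.
have hd' : forall s, s != finset.set0 -> `|F' s - F s| <= d.
  by move=> u u0; rewrite distrC; exact: hd.
rewrite /lifespan_ms; case: pselect => ne; case: pselect => ne'.
- exists (fun _ => Some 0%N); split => //=.
  + move=> i k; rewrite ltnS leqn0 => /eqP -> [<-]; split => //=.
    split; first by rewrite (lp1 s0 ne) (lp1 s0 ne'); exact: hd.
    rewrite /end_close.
    case E1: (lifespan_itv F s).2 => [b|]; case E2: (lifespan_itv F' s).2 => [b'|] //.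
    * rewrite ler_distl.
      have := some_close hF hd s0 ne ne' E1 E2.
      have := some_close hF' hd' s0 ne' ne E2 E1. lra.
    * by have := none_some hF' s0 ne' ne E2 E1.
    * by have := none_some hF s0 ne ne' E1 E2.
  + by move=> i j k; rewrite !ltnS !leqn0 => /eqP -> /eqP ->.
  + by move=> k; rewrite ltnS leqn0 => /eqP -> /(_ 0%N erefl).
- exists (fun _ => None); split => //=.
  by move=> i; rewrite ltnS leqn0 => /eqP -> _; exact (short_empty hF hd s0 ne ne').
- exists (fun _ => None); split => //=.
  by move=> k; rewrite ltnS leqn0 => /eqP -> _; exact (short_empty hF' hd' s0 ne' ne).
- by exists (fun _ => None); split.
Qed.
Unset Implicit Arguments. Set Strict Implicit.

Theorem mainTheorem15 (R : realType) (X : finType) (F F' : {set X} -> R) :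
  is_filtration F -> is_filtration F' ->
  [/\ (d_B (mgm F) (mgm F') <= d_inf F F')%E,
      (d_inf F F' <= d_I_fg F F')%E &
      d_I_fg F F' = (d_I_filt F F')%:E].
Proof.
move=> hF hF'.
set d := d_I_filt F F'.
have d0 : 0 <= d by rewrite /d /d_I_filt; exact: bigmax_ge_id.
have hd : forall s, s != finset.set0 -> `|F s - F' s| <= d.
  by move=> s s0; rewrite /d /d_I_filt; exact: le_bigmax_cond.
have hd' : forall s, s != finset.set0 -> `|F' s - F s| <= d.
  by move=> u u0; rewrite distrC; exact: hd.
have P3 : d_I_fg F F' = d%:E.
  apply/le_anti/andP; split.
    apply: ereal_inf_lbound; exists d => //; split => // t.
    by split; [exact: (interleave_half hd (lexx d)) | exact: (interleave_half hd' (lexx d))].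
  apply: le_ereal_inf_tmp => _ [e [e0 He] <-]; rewrite lee_fin.
  apply: bigmax_le => // s s0.
  have h1 := lower_half hF (fun t => (He t).2) s0.
  have h2 := lower_half hF' (fun t => (He t).1) s0.
  rewrite ler_norml; lra.
have Bs : forall s, s != finset.set0 -> (d_B (lifespan_ms F s) (lifespan_ms F' s) <= d%:E)%E.
  move=> s s0; apply: ereal_inf_lbound; exists d => //; split => //.
  exact/matchN_eps/(per_s hF hF' hd s0).
have P2 : (d_inf F F' <= d%:E)%E.
  by apply: bigmax_le => //; rewrite lee_fin.
split => //; last by rewrite P3.
have D0 : (0 <= d_inf F F')%E by exact: bigmax_ge_id.
have [D DE] : exists D : R, d_inf F F' = D%:E.
  move: D0 P2; case: (d_inf F F') => [D||] //; by exists D.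
rewrite DE; apply/lee_addgt0Pr => eps eps0; rewrite -EFinD.
have D0' : 0 <= D by rewrite -lee_fin -DE.
apply: ereal_inf_lbound; exists (D + eps) => //; split; first lra.
apply: matchN_eps; rewrite /mgm; apply: matchN_flatten => s; rewrite mem_enum => s0.
have : (d_B (lifespan_ms F s) (lifespan_ms F' s) < (D + eps)%:E)%E.
  apply: (le_lt_trans _ (_ : (D%:E < (D + eps)%:E)%E)).
    by rewrite -DE; exact: le_bigmax_cond.
  by rewrite lte_fin; lra.
case/ereal_inf_lt => _ [e [e0 He] <-]; rewrite lte_fin => lt.
by apply: (matchN_mono (ltW lt)); exact: eps_matchN.
Qed.
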